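(* Let $G$ be a connected graph on $n$ vertices that is not a tree. Let $Z_{\mathrm{sink},0}$ be the number of sink-free orientations of $G$ and $Z_{\mathrm{sink},1}$ the number of orientations of $G$ with exactly one sink. Then $\frac{Z_{\mathrm{sink},1}}{Z_{\mathrm{sink},0}}\le n(n-1)$.
   Context: An orientation assigns each edge $\{u,v\}$ a direction $(u,v)$ or $(v,u)$; a sink is a vertex all of whose incident edges are directed towards it; a sink-free orientation has no sink. *)

(* Defs.v *)
From mathcomp Require Import all_boot all_order all_algebra.
Set Implicit Arguments. Unset Strict Implicit. Unset Printing Implicit Defensive.

Definition simple_graph (T : finType) (e : rel T) : Prop :=
  symmetric e /\ irreflexive e.

Definition connected_graph (T : finType) (e : rel T) : Prop :=
  forall u v : T, connect e u v.

Definition has_cycle (T : finType) (e : rel T) : Prop :=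
  exists (x : T) (p : seq T),
    [/\ 2 <= size p, uniq (x :: p), path e x p & e (last x p) x].

Definition is_tree (T : finType) (e : rel T) : Prop :=
  connected_graph e /\ ~ has_cycle e.

(* An orientation is encoded as o : {ffun T * T -> bool}, o (u,v) meaning the
   edge {u,v} is directed (u,v).  It is only true on edges, and each edge
   receives exactly one of its two directions. *)
Definition is_orientation (T : finType) (e : rel T) (o : {ffun T * T -> bool}) : bool :=
  [forall u, forall v, (o (u, v) ==> e u v) && (e u v ==> (o (u, v) != o (v, u)))].

Definition is_sink (T : finType) (e : rel T) (o : {ffun T * T -> bool}) (v : T) : bool :=
  [forall u, e u v ==> o (u, v)].

Definition num_sinks (T : finType) (e : rel T) (o : {ffun T * T -> bool}) : nat :=
  #|[set v | is_sink e o v]|.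

Definition Z_sink (T : finType) (e : rel T) (k : nat) : nat :=
  #|[set o : {ffun T * T -> bool} | is_orientation e o && (num_sinks e o == k)]|.

(* Main.v *)
Require Import Defs.
From mathcomp Require Import all_boot all_order all_algebra.
From Stdlib Require Import Classical.
Import Order.TTheory GRing.Theory Num.Theory.
Set Implicit Arguments. Unset Strict Implicit. Unset Printing Implicit Defensive.

Definition Fl (T : finType) (s : {ffun T * T -> bool}) (P : T -> T -> bool)
  : {ffun T * T -> bool} :=
  [ffun q => (s q && ~~ P q.1 q.2) || (s (q.2, q.1) && P q.2 q.1)].

Lemma FlE T s P a b : @Fl T s P (a,b) = (s (a,b) && ~~ P a b) || (s (b,a) && P b a).
Proof. by rewrite ffunE. Qed.

Lemma or1 T e o a b : @is_orientation T e o -> o (a,b) -> e a b.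
Proof. move/forallP/(_ a)/forallP/(_ b)/andP=> [H _]; exact: (implyP H). Qed.

Lemma or2 T e o a b : @is_orientation T e o -> e a b -> o (a,b) = ~~ o (b,a).
Proof.
move/forallP/(_ a)/forallP/(_ b)/andP=> [_ H] /(implyP H).
by case: (o (a,b)); case: (o (b,a)).
Qed.

Lemma or_anti T e o a b : @is_orientation T e o -> ~~ (o (a,b) && o (b,a)).
Proof. move=> Ho; apply/negP=> /andP[H1 H2]. have := or2 Ho (or1 Ho H1). by rewrite H1 H2. Qed.

Lemma Fl_orient T e s P : symmetric e -> @is_orientation T e s -> is_orientation e (Fl s P).
Proof.
move=> se Ho; apply/forallP=> a; apply/forallP=> b; apply/andP; split.
  rewrite FlE; apply/implyP=> /orP[/andP[H _]|/andP[H _]]; first exact: or1 Ho H.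
  by rewrite se; exact: or1 Ho H.
apply/implyP=> Hab. have Hba : e b a by rewrite se.
rewrite !FlE (or2 Ho Hab).
by case: (s (b,a)); case: (P a b); case: (P b a).
Qed.

Lemma Fl_inv (T : finType) (s : {ffun T*T -> bool}) P Q :
  (forall a b, ~~ (s (a,b) && s (b,a))) ->
  (forall a b, Fl s P (a,b) -> Q a b = s (b,a) && P b a) ->
  Fl (Fl s P) Q = s.
Proof.
move=> Ha HQ; apply/ffunP=> [[a b]].
have H1 := HQ a b; have H2 := HQ b a; have A := Ha a b.
move: H1 H2 A; rewrite !FlE.
case: (s (a,b)); case: (s (b,a)); case: (P a b); case: (P b a) => //= H1 H2 _;
  rewrite ?H1 ?H2 //.
Qed.

Lemma connect_closed_in (T : finType) (r : rel T) (S : pred T) x y :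
  (forall a b, S a -> r a b -> S b) -> S x -> connect r x y -> S y.
Proof.
move=> HS Sx /connectP[p Hp ->]; elim: p x Sx Hp => //= z p IH x Sx /andP[rxz Hp].
exact: IH (HS _ _ Sx rxz) Hp.
Qed.

Lemma sink_noout T e o v y : symmetric e -> @is_orientation T e o -> is_sink e o v -> ~~ o (v,y).
Proof.
move=> se Ho /forallP Sv; apply/negP=> H.
have evy := or1 Ho H. have eyv : e y v by rewrite se.
have E2 := implyP (Sv y) eyv. have E1 := or2 Ho evy. by rewrite H E2 in E1.
Qed.

Lemma out_not_sink T e o u y : symmetric e -> @is_orientation T e o -> o (u,y) -> ~~ is_sink e o u.
Proof. move=> se Ho H; apply/negP=> S; by rewrite (negbTE (sink_noout y se Ho S)) in H. Qed.

Definition dec (T : finType) (t : {ffun T*T -> bool}) (v w : T) :=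
  Fl t (fun a _ => connect (fun x y => t (x,y) && (x != w)) v a && (a != w)).

Definition ur (T : finType) (s : {ffun T*T -> bool}) : rel T :=
  fun a b => s (a,b) && [forall y, s (a,y) ==> (y == b)].

Lemma ur_step (T : finType) (s : {ffun T*T -> bool}) v x y :
  (forall y, ~~ s (v,y)) -> connect (ur s) x v -> s (x,y) -> ur s x y && connect (ur s) y v.
Proof.
move=> no /connectP[[|d p] /= Hp Hl] sxy.
  by rewrite -Hl in sxy; rewrite (negbTE (no y)) in sxy.
move/andP: Hp => [/andP[sxd /forallP Hd] Hp].
have /eqP yd := implyP (Hd y) sxy. subst d.
rewrite /ur sxy /=; apply/andP; split; first exact/forallP.
by apply/connectP; exists p.
Qed.

Lemma ur_fun (T : finType) (s : {ffun T*T -> bool}) a b c : ur s a b -> ur s a c -> b = c.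
Proof. move=> /andP[_ /forallP Hb] /andP[sac _]. by have /eqP := implyP (Hb c) sac. Qed.

Lemma caseb (T : finType) e (s : {ffun T*T -> bool}) v :
  symmetric e -> has_cycle e -> is_orientation e s ->
  (forall y, ~~ s (v,y)) -> (forall u, connect (ur s) u v) -> False.
Proof.
move=> se cyc Ho no allX.
pose d u := #|[set y | connect (ur s) u y]|.
have Ld : forall u u', ur s u u' -> d u' < d u.
  move=> u u' ruu'. apply: proper_card. apply/properP; split.
    apply/subsetP=> y; rewrite !inE => H; exact: connect_trans (connect1 ruu') H.
  exists u; first by rewrite inE connect0.
  rewrite inE; apply/negP => u'u.
  have closed : forall a b, connect (ur s) a u -> ur s a b -> connect (ur s) b u.
    move=> a b au rab. case: (eqVneq a u) => [au'|neq].
      subst a. by rewrite (ur_fun rab ruu').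
    move/connectP: au => [[|c p] /= Hp Hl]; first by rewrite Hl eqxx in neq.
    move/andP: Hp => [rac Hp]. rewrite (ur_fun rab rac). apply/connectP; by exists p.
  have := connect_closed_in (S := fun x => connect (ur s) x u) closed (connect0 (ur s) u) (allX u).
  move/connectP=> [[|c p] /= Hp Hl].
    by subst u; move/andP: ruu' => [H _]; rewrite (negbTE (no u')) in H.
  by move/andP: Hp => [/andP[H _] _]; rewrite (negbTE (no c)) in H.
move: cyc => [x [p [szp up pp lp]]].
have xin : x \in x :: p by rewrite inE eqxx.
case: (@arg_maxnP _ x (fun y => y \in x :: p) d xin) => c Pc Hmax.
case: (rot_to Pc) => i q Hrot.
have cyc' : cycle e (c :: q) by rewrite -Hrot rot_cycle /= rcons_path pp lp.
have uq : uniq (c :: q) by rewrite -Hrot rot_uniq.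
have szq : 2 <= size q.
  by move: (congr1 size Hrot); rewrite size_rot /= => [[<-]].
have memq : forall y, y \in c :: q -> y \in x :: p by move=> y; rewrite -Hrot mem_rot.
have outc : forall y, e c y -> y \in x :: p -> s (c,y).
  move=> y ecy yin. rewrite (or2 Ho ecy). apply/negP => syc.
  have /andP[ryc _] := ur_step no (allX y) syc.
  have := Ld _ _ ryc. have := Hmax y yin. move=> H1 H2; move: H1; by rewrite /= leqNgt H2.
clear Hrot. case: q cyc' uq szq memq => [|a [|z q3]] //= cyc' uq _ memq.
move: cyc' => /andP[eca /andP[_]]; rewrite rcons_path => /andP[_ ea'c].
have ain : a \in x :: p by apply: memq; rewrite !inE eqxx orbT.
have a'in : last a (z :: q3) \in x :: p.
  by apply: memq; rewrite inE; apply/orP; right; exact: mem_last.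
have sca := outc a eca ain.
have eca' : e c (last a (z :: q3)) by rewrite se; exact: ea'c.
have sca' := outc _ eca' a'in.
have /andP[/andP[_ /forallP Hc] _] := ur_step no (allX c) sca.
have /eqP Ea := implyP (Hc _) sca'.
move: uq; rewrite /= => /andP[_ /andP[anin _]].
have := mem_last z q3. by rewrite [last z q3]Ea (negbTE anin).
Qed.

Lemma key (T : finType) e (s : {ffun T*T -> bool}) (v : T) :
  simple_graph e -> connected_graph e -> has_cycle e -> is_orientation e s ->
  is_sink e s v -> (forall u, is_sink e s u -> u = v) ->
  exists t w, [/\ is_orientation e t, (forall u, ~~ is_sink e t u), v != w & dec t v w = s].
Proof.
move=> [se ie] conn cyc Ho Sv Uv.
have no : forall y, ~~ s (v,y) by move=> y; exact: sink_noout se Ho Sv.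
pose r := ur s.
case: (boolP [exists y, exists z, [&& ~~ connect r y v, connect r z v & s (y,z)]]); last first.
  move=> /existsPn Hn; exfalso; apply: (caseb se cyc Ho no) => u.
  apply: (connect_closed_in (S := fun x => connect r x v) _ (connect0 r v) (conn v u)).
  move=> a b av eab. case sba: (s (b,a)).
    move: (Hn b) => /existsPn/(_ a). by rewrite av sba /= andbT negbK.
  have sab : s (a,b) by rewrite (or2 Ho eab) sba.
  by have /andP[_ ->] := ur_step no av sab.
move=> /existsP[w0 /existsP[b0 /and3P[w0X b0X sw0b0]]].
pose C := [set x | connect r b0 x && connect r x v].
have vC : v \in C by rewrite inE b0X connect0.
have b0C : b0 \in C by rewrite inE connect0 b0X.
have w0C : w0 \notin C by rewrite inE negb_and w0X orbT.
have F2 : forall c x, c \in C -> s (c,x) -> x \in C.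
  move=> c x; rewrite inE => /andP[bc cv] scx. have /andP[rcx xv] := ur_step no cv scx.
  by rewrite inE xv (connect_trans bc (connect1 rcx)).
have [y' /andP[sy' y'b]] : exists y', s (w0,y') && (y' != b0).
  case: (boolP [exists y', s (w0,y') && (y' != b0)]) => [/existsP//|/existsPn H].
  exfalso; move/negP: w0X; apply. apply: connect_trans (connect1 _) b0X.
  rewrite /r /ur sw0b0 /=. apply/forallP=> y; apply/implyP=> sy.
  by move: (H y); rewrite sy /= negbK.
pose P := fun a b => (a \in C) || ((a == w0) && (b == b0)).
pose t := Fl s P.
have Ht : is_orientation e t := Fl_orient P se Ho.
have tE : forall a b, t (a,b) = (s (a,b) && ~~ P a b) || (s (b,a) && P b a).
  by move=> a b; rewrite FlE.
have PC : forall a b, a \in C -> P a b by move=> a b aC; rewrite /P aC.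
exists t, w0; split => //.
- move=> u. 
  have [y ty] : exists y, t (u,y); last exact: out_not_sink se Ht ty.
  case: (eqVneq u w0) => [->|uw0].
    exists y'; rewrite tE sy' /P (negbTE w0C) eqxx (negbTE y'b) /=. done.
  case uC: (u \in C).
    case: (eqVneq u b0) => [->|ub0].
      by exists w0; rewrite tE; apply/orP; right; rewrite sw0b0 /P !eqxx orbT.
    move: uC; rewrite inE => /andP[/connectP[pp Hp Hl] uv].
    case/lastP: pp Hp Hl => [/= _ Hl|pp z]; first by rewrite Hl eqxx in ub0.
    rewrite rcons_path last_rcons => /andP[Hp raz] Hl; subst z.
    have aC : last b0 pp \in C.
      rewrite inE; apply/andP; split; first by apply/connectP; exists pp.
      exact: connect_trans (connect1 raz) uv.
    exists (last b0 pp); rewrite tE (PC _ _ aC) andbT.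
    by move/andP: raz => [-> _]; rewrite orbT.
  have uv : u != v by apply: contraFneq uC => ->.
  have /existsP[y /andP[eyu nsyu]] : [exists y, e y u && ~~ s (y,u)].
    have Su : ~~ is_sink e s u by apply/negP => Su; rewrite (Uv u Su) eqxx in uv.
    apply/existsP; move/forallPn: Su => [y Hy]; exists y. by move: Hy; rewrite negb_imply.
  have euy : e u y by rewrite se.
  exists y; rewrite tE (or2 Ho euy) nsyu /P uC (negbTE uw0) /=. done.
- by apply: contraNneq w0C => <-.
rewrite /dec; apply: Fl_inv; first by move=> a b; exact: or_anti Ho.
have HQ : forall a, (connect (fun x y => t (x,y) && (x != w0)) v a && (a != w0)) = (a \in C).
  move=> a; apply/idP/idP.
    move=> /andP[Hc aw].
    have : (a \in C) || (a == w0).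
      apply: (connect_closed_in (S := fun x => (x \in C) || (x == w0)) _ _ Hc); last by rewrite vC.
      move=> x y /= Sx /andP[txy xw]. rewrite (negbTE xw) orbF in Sx.
      move: txy; rewrite tE (PC _ _ Sx) andbF /= => /andP[_].
      by rewrite /P => /orP[->//|/andP[-> _]]; rewrite orbT.
    by rewrite (negbTE aw) orbF.
  move=> aC; apply/andP; split; last by apply: contraNneq w0C => <-.
  have ind : forall pp c, path r c pp -> last c pp = v -> c \in C ->
      connect (fun x y => t (x,y) && (x != w0)) v c.
    elim => [|d pp IH] c /=; first by move=> _ -> _; exact: connect0.
    move=> /andP[rcd Hp] Hl cC.
    have scd : s (c,d) by move/andP: rcd => [].
    have dC := F2 _ _ cC scd.
    apply: connect_trans (IH d Hp Hl dC) (connect1 _) => /=.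
    rewrite tE scd (PC _ _ cC) orbT /=.
    by apply: contraNneq w0C => <-.
  move: (aC); rewrite inE => /andP[_ /connectP[pp Hp Hl]].
  exact: ind pp a Hp (esym Hl) aC.
move=> a b tab; rewrite HQ.
case aC: (a \in C).
  by move: tab; rewrite tE (PC _ _ aC) andbF /= => /andP[-> ->].
apply/esym/negbTE/negP => /andP[sba]; rewrite /P => /orP[bC|/andP[_ /eqP ab]].
  by rewrite (F2 _ _ bC sba) in aC.
by rewrite ab b0C in aC.
Qed.

Lemma card_offdiag (T : finType) : #|[set q : T * T | q.1 != q.2]| = #|T| * (#|T| - 1).
Proof.
have Hd : #|[set q : T * T | q.1 == q.2]| = #|T|.
  have -> : [set q : T * T | q.1 == q.2] = [set (x, x) | x : T].
    apply/setP => [[a b]]; rewrite inE /=; apply/eqP/imsetP => [->|[x _ [-> ->]]] //.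
    by exists b.
  by rewrite card_imset // => x y [].
have -> : [set q : T * T | q.1 != q.2] = ~: [set q : T * T | q.1 == q.2].
  by apply/setP => q; rewrite !inE.
have := cardsC [set q : T * T | q.1 == q.2].
rewrite card_prod Hd => H.
by rewrite -(addKn #|T| #|~: _|) H mulnBr muln1.
Qed.

Theorem theorem17 (T : finType) (e : rel T) :
  simple_graph e -> connected_graph e -> ~ is_tree e ->
  ((Z_sink e 1)%:R / (Z_sink e 0)%:R <= (#|T| * (#|T| - 1))%:R :> rat)%R.
Proof.
move=> sg conn nt.
have cyc : has_cycle e.
  by case: (classic (has_cycle e)) => // H; exfalso; apply: nt.
rewrite /Z_sink.
set A := [set o | is_orientation e o && (num_sinks e o == 1)].
set B := [set o | is_orientation e o && (num_sinks e o == 0)].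
pose D := [set q : T * T | q.1 != q.2].
have sub : A \subset [set dec q.1 q.2.1 q.2.2 | q in setX B D].
  apply/subsetP=> o; rewrite inE => /andP[Ho /cards1P [v Hv]].
  have Sv : is_sink e o v by have := set11 v; rewrite -Hv inE.
  have Uv : forall u, is_sink e o u -> u = v.
    by move=> u Su; apply/set1P; rewrite -Hv inE.
  have [t [w [Ht Hs vw Hd]]] := key sg conn cyc Ho Sv Uv.
  apply/imsetP; exists (t, (v, w)); last by rewrite Hd.
  rewrite !inE /= Ht vw /= andbT.
  rewrite /num_sinks cards_eq0; apply/eqP/setP => u; rewrite !inE.
  exact: negbTE (Hs u).
have le1 : #|A| <= #|B| * (#|T| * (#|T| - 1)).
  rewrite -card_offdiag -cardsX.
  exact: leq_trans (subset_leq_card sub) (leq_imset_card _ _).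
case: (posnP #|B|) => [->|Bpos].
  by rewrite invr0 mulr0 ler0n.
rewrite ler_pdivrMr ?ltr0n // -natrM ler_nat.
by rewrite mulnC.
Qed.
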